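(* Let $N\ge1$, $K\ge1$, $T\ge1$, $L>0$, $\sigma_l^2\ge0$, $\sigma_g^2>0$, $C>0$, $\Delta_0=f(W_0)-f^*\ge0$, and truncation errors $\hat r_1,\dots,\hat r_N\ge0$ be fixed, let $D_0=4\big(1+\frac{1}{K^2T}\big)$, and for $p=(p_1,\dots,p_N)\in\mathbb{R}^N$ define $$\Phi(p)=\frac{1}{C}\Bigg[\frac{L\Delta_0}{\sqrt{T}}+\frac{L(L+1)}{2}\Bigg(\frac{3ND_0^K}{\sqrt T}\sum_{i=1}^N p_i^2\hat r_i^2+\frac{24N\sigma_l^2(D_0^K-1)}{L^2K^2T^{3/2}(D_0-1)}\sum_{i=1}^N p_i^2+\frac{6N\sigma_l^2}{L^2\sqrt T}\sum_{i=1}^N p_i^2\Bigg)+\frac{3N(\sigma_l^2+6K\sigma_g^2)}{2KT}\sum_{i=1}^N p_i^2+\frac{N\sigma_l^2}{2\sqrt T}\sum_{i=1}^N p_i^2\Bigg].$$ Then there is a constant $\epsilon>0$, depending only on $N,K,T,L,\sigma_l^2,\sigma_g^2$ (and not on $p$ or the $\hat r_i$), such that the minimizer of $\Phi$ over $\{p\in\mathbb{R}^N:\sum_{i=1}^N p_i=1\}$ is $$p_i^*=\frac{1/(\hat r_i^2+\epsilon)}{\sum_{j=1}^N 1/(\hat r_j^2+\epsilon)},\qquad i=1,\dots,N.$$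
   Context: $\Phi(p)$ is the right-hand side of the FedHL convergence bound $\frac1T\sum_{t=0}^{T-1}\mathbb{E}\|\nabla f(W_t)\|^2\le\Phi(p)$ for heterogeneous-LoRA federated learning with $N$ clients, aggregation weights $p_i$, $K$ local SGD steps, $T$ rounds, learning rate $\eta_t=\frac{1}{LK\sqrt T}$ (so $D_0=4(1+L^2\eta_t^2)$), smoothness constant $L$, local gradient variance bound $\sigma_l^2$, gradient heterogeneity bound $\sigma_g^2$, and $\hat r_i$ bounding the rank-$r_i$ SVD truncation error of client $i$ via $\mathbb{E}\|W_t-[W_t]_{r_i}\|_F^2\le\hat r_i^2$. In the minimization, $C$, $\Delta_0$ and the $\hat r_i$ are held fixed. *)

(* Defs.v *)
From HB Require Import structures.
From mathcomp Require Import all_boot all_order all_algebra.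
From mathcomp Require Import reals.
Set Implicit Arguments. Unset Strict Implicit. Unset Printing Implicit Defensive.
Import Order.TTheory GRing.Theory Num.Theory.
Local Open Scope ring_scope.

Definition D0 {R : realType} (K T : nat) : R := 4 * (1 + 1 / ((K%:R) ^+ 2 * T%:R)).

(* Phi(p) from the FedHL bound; sl2 = sigma_l^2, sg2 = sigma_g^2,
   rhat i = \hat r_i, Delta0 = f(W_0) - f^*.  T^{3/2} is written T * sqrt T. *)
Definition Phi {R : realType} (N K T : nat) (L sl2 sg2 C Delta0 : R)
  (rhat : 'I_N -> R) (p : 'I_N -> R) : R :=
  let sT := Num.sqrt (T%:R : R) in
  let D := D0 (R:=R) K T in
  let Sp2 := \sum_(i < N) p i ^+ 2 in
  let Spr := \sum_(i < N) p i ^+ 2 * rhat i ^+ 2 in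
  (1 / C) *
  ( L * Delta0 / sT
  + L * (L + 1) / 2 *
      ( 3 * N%:R * D ^+ K / sT * Spr
      + 24 * N%:R * sl2 * (D ^+ K - 1)
          / (L ^+ 2 * (K%:R) ^+ 2 * (T%:R * sT) * (D - 1)) * Sp2
      + 6 * N%:R * sl2 / (L ^+ 2 * sT) * Sp2 )
  + 3 * N%:R * (sl2 + 6 * K%:R * sg2) / (2 * K%:R * T%:R) * Sp2
  + N%:R * sl2 / (2 * sT) * Sp2 ).

Definition pstar {R : realType} (N : nat) (rhat : 'I_N -> R) (eps : R) : 'I_N -> R :=
  fun i => (1 / (rhat i ^+ 2 + eps)) / (\sum_(j < N) 1 / (rhat j ^+ 2 + eps)).

(* Main.v *)
Require Import Defs.
From HB Require Import structures.
From mathcomp Require Import all_boot all_order all_algebra.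
From mathcomp Require Import reals.
From mathcomp Require Import ring lra.
From Stdlib Require Import FunctionalExtensionality.
Import Order.TTheory GRing.Theory Num.Theory.
Local Open Scope ring_scope.

Section Aux.
Variable R : realType.

Lemma wsum_decomp (N : nat) (w : 'I_N -> R) :
  (forall i, 0 < w i) -> (0 < N)%N ->
  forall S, S = \sum_(j < N) 1 / w j ->
  forall ps : 'I_N -> R, ps = (fun i => (1 / w i) / S) ->
  \sum_(i < N) ps i = 1 /\ forall p : 'I_N -> R, \sum_(i < N) p i = 1 ->
  \sum_(i < N) w i * p i ^+ 2 =
  \sum_(i < N) w i * ps i ^+ 2 + \sum_(i < N) w i * (p i - ps i) ^+ 2.
Proof.
move=> wpos N0 S eS.
have Spos : 0 < S.
  rewrite eS; clear S eS.
  case: N w wpos N0 => // n w wpos _.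
  rewrite big_ord_recl; apply: ltr_pwDl; first by rewrite divr_gt0.
  by apply: sumr_ge0 => i _; rewrite divr_ge0 // ltW.
move=> ps eps.
have sps : \sum_(i < N) ps i = 1.
  rewrite eps -big_distrl /= -eS divff // gt_eqF //.
split=> // p sp.
have -> : \sum_(i < N) w i * p i ^+ 2 =
  \sum_(i < N) (w i * ps i ^+ 2 + w i * (p i - ps i) ^+ 2 + (2 / S) * (p i - ps i)).
  apply: eq_bigr => i _; have := wpos i => wi; rewrite eps.
  field; by rewrite ?gt_eqF.
rewrite !big_split /= -mulr_sumr sumrB sp sps subrr mulr0 addr0 //.
Qed.

End Aux.

Theorem theorem3 (R : realType) (N K T : nat) (L sl2 sg2 : R) :
  (1 <= N)%N -> (1 <= K)%N -> (1 <= T)%N ->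
  0 < L -> 0 <= sl2 -> 0 < sg2 ->
  exists eps : R, 0 < eps /\
    forall (C Delta0 : R) (rhat : 'I_N -> R),
      0 < C -> 0 <= Delta0 -> (forall i, 0 <= rhat i) ->
      let ps := pstar rhat eps in
      \sum_(i < N) ps i = 1 /\
      forall p : 'I_N -> R, \sum_(i < N) p i = 1 ->
        Phi K T L sl2 sg2 C Delta0 rhat ps <= Phi K T L sl2 sg2 C Delta0 rhat p /\
        (Phi K T L sl2 sg2 C Delta0 rhat p = Phi K T L sl2 sg2 C Delta0 rhat ps ->
         p = ps).
Proof.
move=> N1 K1 T1 L0 sl0 sg0.
set sT := Num.sqrt (T%:R : R).
set D := D0 (R:=R) K T.
have sT0 : 0 < sT by rewrite sqrtr_gt0 ltr0n.
have Kp : (0 : R) < K%:R by rewrite ltr0n.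
have Tp : (0 : R) < T%:R by rewrite ltr0n.
have Np : (0 : R) < N%:R by rewrite ltr0n.
have D4 : 4 <= D.
  rewrite /D /D0; have : 0 <= 1 / ((K%:R : R) ^+ 2 * T%:R).
    by rewrite divr_ge0 // mulr_ge0 // ?exprn_ge0 // ltW.
  lra.
have D1 : 1 <= D ^+ K by apply: exprn_ege1; lra.
set A' := L * (L + 1) / 2 * (3 * N%:R * D ^+ K / sT).
set B' := L * (L + 1) / 2 *
      ( 24 * N%:R * sl2 * (D ^+ K - 1)
          / (L ^+ 2 * (K%:R) ^+ 2 * (T%:R * sT) * (D - 1))
      + 6 * N%:R * sl2 / (L ^+ 2 * sT))
  + 3 * N%:R * (sl2 + 6 * K%:R * sg2) / (2 * K%:R * T%:R)
  + N%:R * sl2 / (2 * sT).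
have A'0 : 0 < A'.
  have DK : 0 < D ^+ K by lra.
  rewrite /A' mulr_gt0 //; first by rewrite divr_gt0 ?mulr_gt0 //; lra.
  by rewrite divr_gt0 ?mulr_gt0 //; lra.
have B'0 : 0 < B'.
  have P1 : 0 <= L * (L + 1) / 2 *
      ( 24 * N%:R * sl2 * (D ^+ K - 1)
          / (L ^+ 2 * (K%:R) ^+ 2 * (T%:R * sT) * (D - 1))
      + 6 * N%:R * sl2 / (L ^+ 2 * sT)).
    rewrite mulr_ge0 //; first by rewrite divr_ge0 ?mulr_ge0 //; lra.
    rewrite addr_ge0 //; rewrite divr_ge0 ?mulr_ge0 ?exprn_ge0 //; try lra.
    all: try lra.
  have P2 : 0 < 3 * N%:R * (sl2 + 6 * K%:R * sg2) / (2 * K%:R * T%:R).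
    rewrite divr_gt0 ?mulr_gt0 //; try lra.
    have : 0 < K%:R * sg2 by rewrite mulr_gt0.
    lra.
  have P3 : 0 <= N%:R * sl2 / (2 * sT).
    rewrite divr_ge0 ?mulr_ge0 //; lra.
  rewrite /B'; lra.
exists (B' / A'); split; first by rewrite divr_gt0.
move=> C Delta0 rhat C0 _ r0 ps.
set w := fun i => rhat i ^+ 2 + B' / A'.
have wpos : forall i, 0 < w i.
  move=> i; rewrite /w; apply: ltr_pwDr; first by rewrite divr_gt0.
  exact: exprn_ge0.
have PhiE : forall p : 'I_N -> R, Phi K T L sl2 sg2 C Delta0 rhat p =
   1 / C * (L * Delta0 / sT) + A' / C * \sum_(i < N) w i * p i ^+ 2.
  move=> p.
  have -> : \sum_(i < N) w i * p i ^+ 2 =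
     \sum_(i < N) p i ^+ 2 * rhat i ^+ 2 + B' / A' * \sum_(i < N) p i ^+ 2.
    rewrite mulr_sumr -big_split; apply: eq_bigr => i _ /=; rewrite /w; ring.
  have hA : A' / C * (B' / A') = B' / C.
    by field; rewrite !gt_eqF.
  rewrite mulrDr mulrA hA.
  rewrite /Phi /= -/sT -/D /B' /A'.
  ring.
have H := @wsum_decomp R N w wpos N1 _ erefl ps erefl.
case: H => sps dec.
split; first exact: sps.
move=> p sp; rewrite !PhiE (dec p sp).
have AC : 0 < A' / C by rewrite divr_gt0.
have sq0 : forall i, 0 <= w i * (p i - ps i) ^+ 2.
  by move=> i; apply: mulr_ge0; [exact: ltW | exact: sqr_ge0].
have Q0 : 0 <= \sum_(i < N) w i * (p i - ps i) ^+ 2.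
  by apply: sumr_ge0 => i _; apply: mulr_ge0; [exact: ltW | exact: sqr_ge0].
split.
  rewrite lerD2l ler_pM2l // lerDl //.
rewrite mulrDr => E.
have /eqP : A' / C * \sum_(i < N) w i * (p i - ps i) ^+ 2 = 0 by lra.
rewrite mulf_eq0 (gt_eqF AC) /= => /eqP HS.
have H := psumr_eq0P (fun i _ => sq0 i) HS.
apply: functional_extensionality => i; apply/eqP; rewrite -subr_eq0.
have := H i isT; move=> /eqP; rewrite mulf_eq0 (gt_eqF (wpos i)) /= sqrf_eq0.
by [].
Qed.
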